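(* Let $p,q\ge0$ with $n=p+q>0$, and let $\Gamma=\{(a_1,\dots,a_n)\in\mathbb{Z}^n\mid a_1+\cdots+a_n\in2\mathbb{Z}\}$. For $A\in\{A^+_{p|q},A^-_{q|p}\}$ let $C(A)=\bigoplus_{d\in\Gamma}A_d$ be the subsuperalgebra of elements whose $\mathbb{Z}^n$-support lies in $\Gamma$. Then $C(A^+_{p|q})$ and $C(A^-_{q|p})$ are isomorphic superalgebras.
   Context: $\Bbbk$ is an algebraically closed field of characteristic $0$. For integers $a,b\ge0$, $N=a+b$, and a sign $\pm$, the superalgebra $A^\pm_{a|b}$ is generated by $x_i,\partial_i$ ($1\le i\le N$), of parity $0$ for $i\le a$ and $1$ for $i>a$, subject to $[\partial_i,x_j]_\pm=\delta_{ij}$, $[x_i,x_j]_\pm=[\partial_i,\partial_j]_\pm=0$, with $[u,v]_\pm=uv\pm(-1)^{p(u)p(v)}vu$. It is $\mathbb{Z}^N$-graded by $\deg x_i=\mathbf{e}_i$, $\deg\partial_i=-\mathbf{e}_i$. (Thus $A^+_{p|q}$ has $p$ even Clifford pairs and $q$ odd Weyl pairs, while $A^-_{q|p}$ has $q$ even Weyl pairs and $p$ odd Clifford pairs.) *)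

(* Defs.v *)
From HB Require Import structures.
From mathcomp Require Import all_boot all_order all_algebra all_field.
Import GRing.Theory.
Local Open Scope ring_scope.

(* A "generator" of A_{a|b}: (true, i) stands for x_i and (false, i) for
   partial_i, with i : 'I_N, N = a + b (0-indexed, so x_i is odd iff a <= i). *)
Definition gen (N : nat) := (bool * 'I_N)%type.

Definition odd_idx (a : nat) {N : nat} (i : 'I_N) : bool := (a <= i)%N.

Definition sbracket {k : fieldType} {A : algType k} (plus : bool) (pu pv : bool)
  (u v : A) : A :=
  u * v + (if plus then 1 else -1) * (-1) ^+ (pu && pv) * (v * u).

Definition Arels {k : fieldType} {A : algType k} (plus : bool) (a b : nat)
  (x d : 'I_(a + b) -> A) : Prop :=
  [/\ forall i j, sbracket plus (odd_idx a i) (odd_idx a j) (d i) (x j) = (i == j)%:R,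
      forall i j, sbracket plus (odd_idx a i) (odd_idx a j) (x i) (x j) = 0 &
      forall i j, sbracket plus (odd_idx a i) (odd_idx a j) (d i) (d j) = 0].

Definition is_alg_hom {k : fieldType} {A B : algType k} (f : A -> B) : Prop :=
  [/\ forall (c : k) (u v : A), f (c *: u + v) = c *: f u + f v,
      f 1 = 1 &
      forall u v : A, f (u * v) = f u * f v].

(* (A, x, d) is the superalgebra A^pm_{a|b} presented by generators x_i,
   partial_i and the relations above: it satisfies the relations and is
   universal (initial) among k-algebras with such families. *)
Definition is_A {k : fieldType} (plus : bool) (a b : nat) (A : algType k)
  (x d : 'I_(a + b) -> A) : Prop :=
  Arels plus a b x d /\
  forall (B : algType k) (y e : 'I_(a + b) -> B), Arels plus a b y e ->
    (exists f : A -> B, is_alg_hom f /\ forall i, f (x i) = y i /\ f (d i) = e i) /\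
    (forall f g : A -> B, is_alg_hom f -> is_alg_hom g ->
       (forall i, f (x i) = g (x i) /\ f (d i) = g (d i)) -> f =1 g).

Definition gen_val {k : fieldType} {A : algType k} {N : nat} (x d : 'I_N -> A)
  (g : gen N) : A := if g.1 then x g.2 else d g.2.
Definition word_val {k : fieldType} {A : algType k} {N : nat} (x d : 'I_N -> A)
  (w : seq (gen N)) : A := \prod_(g <- w) gen_val x d g.

Definition word_deg {N : nat} (w : seq (gen N)) (i : 'I_N) : int :=
  (count_mem (true, i) w)%:Z - (count_mem (false, i) w)%:Z.

Definition in_Gamma {N : nat} (dg : 'I_N -> int) : bool :=
  (2 %| \sum_(i < N) dg i)%Z.

Definition word_par (a : nat) {N : nat} (w : seq (gen N)) : bool :=
  odd (count (fun g : gen N => odd_idx a g.2) w).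

Definition in_span {k : fieldType} {A : algType k} {N : nat} (x d : 'I_N -> A)
  (P : seq (gen N) -> bool) (u : A) : Prop :=
  exists s : seq (k * seq (gen N)),
    all (fun pw => P pw.2) s /\ u = \sum_(pw <- s) pw.1 *: word_val x d pw.2.

Definition Acomp {k : fieldType} {A : algType k} {N : nat} (x d : 'I_N -> A)
  (dg : 'I_N -> int) (u : A) : Prop :=
  in_span x d (fun w => [forall i, word_deg w i == dg i]) u.

Definition Cpart {k : fieldType} {A : algType k} {N : nat} (x d : 'I_N -> A)
  (u : A) : Prop :=
  in_span x d (fun w => in_Gamma (word_deg w)) u.

Definition Apar {k : fieldType} {A : algType k} (a : nat) {N : nat}
  (x d : 'I_N -> A) (par : bool) (u : A) : Prop :=
  in_span x d (fun w => word_par a w == par) u.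

Definition super_iso {k : fieldType} {A1 A2 : algType k}
  (C1 : A1 -> Prop) (P1 : bool -> A1 -> Prop)
  (C2 : A2 -> Prop) (P2 : bool -> A2 -> Prop) : Prop :=
  exists f : A1 -> A2,
    [/\ forall u, C1 u -> C2 (f u),
        forall v, C2 v -> exists2 u, C1 u & f u = v &
        forall u v, C1 u -> C1 v -> f u = f v -> u = v] /\
    [/\ forall (c : k) u v, C1 u -> C1 v -> f (c *: u + v) = c *: f u + f v,
        f 1 = 1,
        forall u v, C1 u -> C1 v -> f (u * v) = f u * f v &
        forall (par : bool) u, C1 u -> P1 par u -> P2 par (f u)].

(* Main.v *)
Require Import Defs.
From HB Require Import structures.
From mathcomp Require Import all_boot all_order all_algebra all_field ring.
Import GRing.Theory.
Local Open Scope ring_scope.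

Lemma sum_count_gen N (b : bool) (w : seq (gen N)) :
  (\sum_(i < N) count_mem (b, i) w = count (fun g : gen N => g.1 == b) w)%N.
Proof.
elim: w => [|[b' j] w IH] /=; first by rewrite big1.
rewrite big_split /= IH; congr (_ + _)%N.
case: eqP => [->|nb] /=.
  rewrite (bigD1 j) //= eqxx big1 // => i /negbTE; rewrite eq_sym.
  by move=> h; rewrite xpair_eqE h andbF.
by rewrite big1 // => i _; rewrite xpair_eqE; case: eqP => // -[]; move/esym.
Qed.

Lemma in_GammaE N (w : seq (gen N)) : in_Gamma (word_deg w) = ~~ odd (size w).
Proof.
rewrite /in_Gamma /word_deg sumrB.
rewrite -!(big_morph Posz PoszD (erefl 0%:Z)) !sum_count_gen.
have hs : (count (fun g : gen N => g.1 == true) w + count (fun g : gen N => g.1 == false) w = size w)%N.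
  by rewrite -(count_predC (fun g : gen N => g.1 == true)); congr (_ + _)%N; apply: eq_count => -[[] ?].
rewrite -hs dvdzE.
set m := count _ w; set n := count _ w.
case: (leqP n m) => [h|h].
  rewrite distnEl //; change (2 %| m - n)%N with (2 %| m - n)%N.
  by rewrite dvdn2 oddB // oddD.
have hmn : (m <= n)%N := ltnW h.
rewrite (distnEr hmn); change (2 %| n - m)%N with (2 %| n - m)%N.
by rewrite dvdn2 (oddB hmn) oddD addbC.
Qed.

Section Hom.
Variables (k : fieldType) (A B : algType k) (f : A -> B) (hf : is_alg_hom f).
Lemma homD u v : f (u + v) = f u + f v.
Proof. by have [h _ _] := hf; have := h 1 u v; rewrite !scale1r. Qed.
Lemma hom0 : f 0 = 0.
Proof. by have := homD 0 0; rewrite addr0 => /eqP; rewrite -subr_eq0 opprD addrA subrr sub0r oppr_eq0 => /eqP. Qed.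
Lemma homZ c u : f (c *: u) = c *: f u.
Proof. by have [h _ _] := hf; have := h c u 0; rewrite !addr0 hom0 addr0. Qed.
Lemma homN u : f (- u) = - f u.
Proof. by rewrite -scaleN1r homZ scaleN1r. Qed.
Lemma homM u v : f (u * v) = f u * f v.
Proof. by have [_ _ h] := hf; rewrite h. Qed.
Lemma hom1 : f 1 = 1.
Proof. by have [_ h _] := hf. Qed.
Lemma hom_prod (I : Type) (s : seq I) (F : I -> A) :
  f (\prod_(i <- s) F i) = \prod_(i <- s) f (F i).
Proof. by elim: s => [|i s IH]; rewrite ?big_nil ?hom1 // !big_cons homM IH. Qed.
Lemma hom_sum (I : Type) (s : seq I) (F : I -> A) :
  f (\sum_(i <- s) F i) = \sum_(i <- s) f (F i).
Proof. by elim: s => [|i s IH]; rewrite ?big_nil ?hom0 // !big_cons homD IH. Qed.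
End Hom.
Arguments homD {k A B f}.
Arguments hom0 {k A B f}.
Arguments homZ {k A B f}.
Arguments homN {k A B f}.
Arguments homM {k A B f}.
Arguments hom1 {k A B f}.
Arguments hom_prod {k A B f}.
Arguments hom_sum {k A B f}.

Lemma id_hom (k : fieldType) (A : algType k) : is_alg_hom (@id A).
Proof. by []. Qed.
Lemma comp_hom (k : fieldType) (A B C : algType k) (f : A -> B) (g : B -> C) :
  is_alg_hom f -> is_alg_hom g -> is_alg_hom (g \o f).
Proof.
move=> hf hg; split=> [c u v|/=|u v /=].
- by rewrite /= (homD hf) (homZ hf) (homD hg) (homZ hg).
- by rewrite (hom1 hf) (hom1 hg).
- by rewrite (homM hf) (homM hg).
Qed.

Arguments comp_hom {k A B C f g}.
Definition sg {k : fieldType} (pl pu pv : bool) : k := (if pl then 1 else -1) * (-1) ^+ (pu && pv).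

Lemma sbracketE (k : fieldType) (A : algType k) pl pu pv (u v : A) :
  sbracket pl pu pv u v = u * v + sg pl pu pv *: (v * u).
Proof.
rewrite /sbracket /sg; congr (_ + _).
by case: pl; case: (pu && pv) => /=; rewrite ?expr0 ?expr1 ?mul1r ?mulr1 ?mulN1r ?opprK ?mul1r ?scale1r ?scaleN1r.
Qed.

Definition sw {a b : nat} (i : 'I_(a + b)) : 'I_(b + a) :=
  match split i with inl j => rshift b j | inr j => lshift a j end.

Lemma split_l m n (j : 'I_m) : split (lshift n j) = inl j.
Proof. exact: (unsplitK (inl j)). Qed.
Lemma split_r m n (j : 'I_n) : split (rshift m j) = inr j.
Proof. exact: (unsplitK (inr j)). Qed.

Lemma swK a b (i : 'I_(a + b)) : sw (sw i) = i.
Proof.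
rewrite {2}/sw; case: (splitP i) => j hj.
  by rewrite /sw split_r; apply: val_inj.
by rewrite /sw split_l; apply: val_inj.
Qed.

Lemma sw_odd a b (i : 'I_(a + b)) : odd_idx b (sw i) = ~~ odd_idx a i.
Proof.
rewrite /odd_idx /sw; case: (splitP i) => j hj /=; rewrite hj.
  by rewrite leq_addr leqNgt ltn_ord.
by rewrite leq_addr leqNgt ltn_ord.
Qed.

Definition swg {a b : nat} (g : gen (a + b)) : gen (b + a) := (g.1, sw g.2).
Lemma swgK a b (g : gen (a + b)) : swg (swg g) = g.
Proof. by case: g => ? ?; rewrite /swg /= swK. Qed.

Section SD.
Variables (k : fieldType) (A : algType k).

Record invol := Invol { th :> A -> A; thH : is_alg_hom th; thK : involutive th }.

Variable t : invol.

Lemma tD u v : t (u + v) = t u + t v.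
Proof. by have [h _ _] := thH t; have := h 1 u v; rewrite !scale1r. Qed.
Lemma t0 : t 0 = 0.
Proof. by have := tD 0 0; rewrite addr0 => /eqP; rewrite -subr_eq0 opprD addrA subrr sub0r oppr_eq0 => /eqP. Qed.
Lemma tZ c u : t (c *: u) = c *: t u.
Proof. by have [h _ _] := thH t; have := h c u 0; rewrite !addr0 t0 addr0. Qed.
Lemma tN u : t (- u) = - t u.
Proof. by rewrite -scaleN1r tZ scaleN1r. Qed.
Lemma tM u v : t (u * v) = t u * t v.
Proof. by have [_ _ h] := thH t; rewrite h. Qed.
Lemma t1 : t 1 = 1.
Proof. by have [_ h _] := thH t. Qed.

Record sdp (t : invol) : Type := SDP { sd1 : A; sd2 : A }.
Arguments sd1 {t}. Arguments sd2 {t}.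
Definition sdp2pair (u : sdp t) := (sd1 u, sd2 u).
Definition pair2sdp (u : A * A) : sdp t := SDP t u.1 u.2.
Lemma sdp2pairK : cancel sdp2pair pair2sdp. Proof. by case. Qed.
HB.instance Definition _ := Choice.copy (sdp t) (can_type sdp2pairK).

Definition sdadd (u v : sdp t) := SDP t (sd1 u + sd1 v) (sd2 u + sd2 v).
Definition sdopp (u : sdp t) := SDP t (- sd1 u) (- sd2 u).
Definition sdzero := SDP t 0 0.
Lemma sdaddA : associative sdadd. Proof. by move=> [? ?] [? ?] [? ?]; rewrite /sdadd /= !addrA. Qed.
Lemma sdaddC : commutative sdadd. Proof. by move=> [? ?] [? ?]; rewrite /sdadd /=; congr SDP; apply: addrC. Qed.
Lemma sdadd0 : left_id sdzero sdadd. Proof. by move=> [? ?]; rewrite /sdadd /= !add0r. Qed.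
Lemma sdaddN : left_inverse sdzero sdopp sdadd. Proof. by move=> [? ?]; rewrite /sdadd /= !addNr. Qed.
HB.instance Definition _ := GRing.isZmodule.Build (sdp t) sdaddA sdaddC sdadd0 sdaddN.
Definition sdscale (c : k) (u : sdp t) := SDP t (c *: sd1 u) (c *: sd2 u).
Lemma sdscaleA a b v : sdscale a (sdscale b v) = sdscale (a * b) v.
Proof. by case: v => ? ?; rewrite /sdscale /= !scalerA. Qed.
Lemma sdscale1 : left_id 1 sdscale. Proof. by case=> ? ?; rewrite /sdscale /= !scale1r. Qed.
Lemma sdscaleDr : right_distributive sdscale +%R.
Proof. by move=> a [? ?] [? ?]; rewrite /sdscale /GRing.add /= /sdadd /= !scalerDr. Qed.
Lemma sdscaleDl v : {morph sdscale^~ v : a b / a + b}.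
Proof. by case: v => ? ? a b; rewrite /sdscale /GRing.add /= /sdadd /= !scalerDl. Qed.
HB.instance Definition _ := GRing.Zmodule_isLmodule.Build k (sdp t) sdscaleA sdscale1 sdscaleDr sdscaleDl.

Definition sdmul (u v : sdp t) : sdp t :=
  SDP t (sd1 u * sd1 v + sd2 u * t (sd2 v)) (sd1 u * sd2 v + sd2 u * t (sd1 v)).
Definition sdone : sdp t := SDP t 1 0.

Lemma sdmulA : associative sdmul.
Proof.
move=> [a b] [a' b'] [a'' b'']; rewrite /sdmul /=.
rewrite !tD !tM !thK !mulrDl !mulrDr !mulrA.
congr SDP; rewrite -!addrA; congr (_ + _). all: by rewrite [LHS]addrC -addrA [LHS]addrC -addrA.
Qed.
Lemma sdmul1r : left_id sdone sdmul.
Proof. by move=> [a b]; rewrite /sdmul /= !mul1r !mul0r !addr0. Qed.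
Lemma sdmulr1 : right_id sdone sdmul.
Proof. by move=> [a b]; rewrite /sdmul /= t0 t1 !mulr1 !mulr0 addr0 add0r. Qed.
Lemma sdmulDl : left_distributive sdmul +%R.
Proof. by move=> [a b] [a' b'] [a'' b'']; rewrite /sdmul /= !mulrDl; congr SDP; rewrite addrACA. Qed.
Lemma sdmulDr : right_distributive sdmul +%R.
Proof. by move=> [a b] [a' b'] [a'' b'']; rewrite /sdmul /= !tD !mulrDr; congr SDP; rewrite addrACA. Qed.
Lemma sdone_neq0 : sdone != 0.
Proof. by apply/eqP => -[] /eqP; rewrite oner_eq0. Qed.

HB.instance Definition _ := GRing.Zmodule_isNzRing.Build (sdp t)
  sdmulA sdmul1r sdmulr1 sdmulDl sdmulDr sdone_neq0.

Lemma sdscalerAl (c : k) (u v : sdp t) : c *: (u * v) = (c *: u) * v.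
Proof. move: u v => [a b] [a' b']. rewrite /GRing.mul /= /sdmul /GRing.scale /= /sdscale /=. by congr SDP; rewrite scalerDr !scalerAl. Qed.
HB.instance Definition _ := GRing.Lmodule_isLalgebra.Build k (sdp t) sdscalerAl.
Lemma sdscalerAr (c : k) (u v : sdp t) : c *: (u * v) = u * (c *: v).
Proof. move: u v => [a b] [a' b']. rewrite /GRing.mul /= /sdmul /GRing.scale /= /sdscale /= !tZ. by congr SDP; rewrite scalerDr !scalerAr. Qed.
HB.instance Definition _ := GRing.Lalgebra_isAlgebra.Build k (sdp t) sdscalerAr.

Check (sdp t : algType k).
End SD.
Arguments SDP {k A t}.
Arguments sd1 {k A t}.
Arguments sd2 {k A t}.
Arguments tD {k A t}. Arguments t0 {k A t}. Arguments tZ {k A t}.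
Arguments tN {k A t}. Arguments tM {k A t}. Arguments t1 {k A t}.
Arguments Invol {k A}.
Section SDE.
Variables (k : fieldType) (A : algType k) (t : invol k A).
Lemma sdmulE (a1 b1 a2 b2 : A) :
  (SDP a1 b1 : sdp k A t) * SDP a2 b2 = SDP (a1 * a2 + b1 * t b2) (a1 * b2 + b1 * t a2).
Proof. by []. Qed.
Lemma sdaddE (a1 b1 a2 b2 : A) :
  (SDP a1 b1 : sdp k A t) + SDP a2 b2 = SDP (a1 + a2) (b1 + b2).
Proof. by []. Qed.
Lemma sdscaleE c (a1 b1 : A) : c *: (SDP a1 b1 : sdp k A t) = SDP (c *: a1) (c *: b1).
Proof. by []. Qed.
Lemma sd1E : (1 : sdp k A t) = SDP 1 0. Proof. by []. Qed.
Lemma sd0E : (0 : sdp k A t) = SDP 0 0. Proof. by []. Qed.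
Lemma sdp_eta (u : sdp k A t) : u = SDP (sd1 u) (sd2 u). Proof. by case: u. Qed.
Lemma sd2_sum (I : Type) (s : seq I) (G : I -> sdp k A t) :
  sd2 (\sum_(i <- s) G i) = \sum_(i <- s) sd2 (G i).
Proof. by elim: s => [|i s IH]; rewrite ?big_nil // !big_cons -IH; case: (G i); case: (\sum_(j <- s) G j). Qed.
End SDE.
Arguments sdmulE {k A t}. Arguments sdaddE {k A t}. Arguments sdscaleE {k A t}.
Arguments sd1E {k A t}. Arguments sd0E {k A t}. Arguments sdp_eta {k A t}.
Arguments sd2_sum {k A t I}.

Section Transfer.
Variables (k : fieldType) (r : k) (hr : r * r = -1).
Definition eps (o : bool) : k := if o then -1 else 1.
Definition al (o : bool) : k := if o then r else 1.

Lemma sbracketZ (A : algType k) pl pu pv (c c' : k) (u v : A) :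
  sbracket pl pu pv (c *: u) (c' *: v) = (c * c') *: sbracket pl pu pv u v.
Proof.
rewrite !sbracketE -!scalerAl -!scalerAr !scalerA scalerDr scalerA.
by congr (_ + _); congr (_ *: _); ring.
Qed.

Lemma eps2 o : eps o * eps o = 1.
Proof. by case: o; rewrite /eps ?mulrNN mulr1. Qed.

Variables (pl : bool) (a b : nat) (A : algType k) (x d : 'I_(a + b) -> A).
Hypothesis HA : is_A pl a b A x d.

Lemma theta_exists : exists t : invol k A,
  forall i, t (x i) = eps (odd_idx a i) *: x i /\ t (d i) = eps (odd_idx a i) *: d i.
Proof.
have [[R1 R2 R3] HU] := HA.
have HR : Arels pl a b (fun i => eps (odd_idx a i) *: x i) (fun i => eps (odd_idx a i) *: d i).
  split=> i j; rewrite sbracketZ ?R1 ?R2 ?R3 ?scaler0 //.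
  by case: eqP => [->|_]; rewrite ?eps2 ?scale1r ?scaler0.
have [[f [hf fv]] _] := HU A _ _ HR.
have invf : involutive f.
  have [_ U] := HU A x d (And3 R1 R2 R3).
  suff H : (f \o f) =1 id by move=> u; exact: H u.
  apply: (U (f \o f) id (comp_hom hf hf) (@id_hom _ _)) => i /=.
  have [-> ->] := fv i.
  by rewrite !(homZ hf) !(proj1 (fv i)) !(proj2 (fv i)) !scalerA eps2 !scale1r.
by exists (Invol f hf invf).
Qed.

Variable t : invol k A.
Hypothesis ht : forall i, t (x i) = eps (odd_idx a i) *: x i /\ t (d i) = eps (odd_idx a i) *: d i.

Lemma key (oI oJ : bool) (u v w : A) :
  t u = eps oI *: u -> t v = eps oJ *: v -> sbracket pl oI oJ u v = w ->
  sbracket (~~ pl) (~~ oI) (~~ oJ) (SDP 0 (al oI *: u) : sdp k A t) (SDP 0 (al oJ *: v))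
  = SDP ((al oI * al oJ * eps oJ) *: w) 0.
Proof.
move=> tu tv <-; rewrite !sbracketE !sdmulE sdscaleE sdaddE !t0 !tZ tu tv.
rewrite !mul0r !mulr0 ?addr0 ?add0r ?scaler0 ?addr0; congr SDP.
rewrite -!scalerAl -!scalerAr !scalerA scalerDr scalerA; congr (_ + _).
  by congr (_ *: _); ring.
by congr (_ *: _); clear tu tv; case: pl; case: oI; case: oJ; rewrite /sg /eps /al /=; ring.
Qed.

Definition Yx (j : 'I_(b + a)) : sdp k A t := SDP 0 (al (odd_idx a (sw j)) *: x (sw j)).
Definition Yd (j : 'I_(b + a)) : sdp k A t := SDP 0 (al (odd_idx a (sw j)) *: d (sw j)).

Lemma odd_sw (j : 'I_(b + a)) : odd_idx b j = ~~ odd_idx a (sw j).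
Proof. by rewrite sw_odd negbK. Qed.

Lemma al2 o : al o * al o * eps o = 1.
Proof. by case: o; rewrite /al /eps /= ?hr ?mulrNN ?mulr1. Qed.

Lemma Y_rels : Arels (~~ pl) b a Yx Yd.
Proof.
have [[R1 R2 R3] _] := HA.
split=> i j; rewrite !odd_sw /Yx /Yd.
- rewrite (@key _ _ _ _ _ (proj2 (ht _)) (proj1 (ht _)) (R1 _ _)).
  rewrite (inj_eq (can_inj (@swK b a))).
  case: eqP => [->|_]; last by rewrite !mulr0n scaler0.
  by rewrite !mulr1n al2 scale1r.
- by rewrite (@key _ _ _ _ _ (proj1 (ht _)) (proj1 (ht _)) (R2 _ _)) scaler0.
- by rewrite (@key _ _ _ _ _ (proj2 (ht _)) (proj2 (ht _)) (R3 _ _)) scaler0.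
Qed.

Lemma t_gen (g : gen (a + b)) : t (gen_val x d g) = eps (odd_idx a g.2) *: gen_val x d g.
Proof. by case: g => [[] i]; rewrite /gen_val /=; case: (ht i). Qed.

Lemma t_word (w : seq (gen (a + b))) :
  t (word_val x d w) = (\prod_(g <- w) eps (odd_idx a g.2)) *: word_val x d w.
Proof.
elim: w => [|g w IH]; rewrite /word_val ?big_nil ?t1 ?scale1r // !big_cons.
by rewrite tM t_gen -/(word_val x d w) IH -scalerAl -scalerAr scalerA.
Qed.

Fixpoint cw (s : seq bool) : k :=
  if s is o :: s' then al (~~ o) * \prod_(h <- s') eps (~~ h) * cw s' else 1.

Definition Yg (g : gen (b + a)) : sdp k A t := if g.1 then Yx g.2 else Yd g.2.

Lemma Yg_prod (w : seq (gen (b + a))) :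
  \prod_(g <- w) Yg g =
  if odd (size w) then
    SDP 0 (cw [seq odd_idx b g.2 | g <- w] *: word_val x d [seq swg g | g <- w])
  else SDP (cw [seq odd_idx b g.2 | g <- w] *: word_val x d [seq swg g | g <- w]) 0.
Proof.
elim: w => [|g w IH]; first by rewrite big_nil /= /word_val big_nil scale1r.
have hY : Yg g = SDP 0 (al (~~ odd_idx b g.2) *: gen_val x d (swg g)).
  by case: g => [[] j]; rewrite /Yg /= odd_sw negbK.
have tW : t (cw [seq odd_idx b g.2 | g <- w] *: word_val x d [seq swg g | g <- w]) =
   ((\prod_(h <- w) eps (~~ odd_idx b h.2)) * cw [seq odd_idx b g.2 | g <- w]) *:
     word_val x d [seq swg g | g <- w].
  rewrite tZ t_word big_map scalerA mulrC; congr ((_ * _) *: _).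
  by apply: eq_bigr => h _; rewrite odd_sw negbK.
rewrite big_cons IH hY /= /word_val big_cons -/(word_val x d _).
case: (odd (size w)) => /=;
  rewrite sdmulE ?t0 ?mul0r ?mulr0 ?add0r ?addr0 tW -scalerAl -scalerAr scalerA;
  by congr SDP; congr (_ *: _); rewrite big_map mulrA.
Qed.

End Transfer.
Arguments cw {k} r s.
Arguments theta_exists {k pl a b A x d}.
Arguments Y_rels {k r} hr {pl a b A x d} HA {t} ht.
Arguments Yg {k} r {a b A x d} t g.
Arguments Yg_prod {k r a b A x d t} ht w.

Lemma transfer (k : fieldType) (r : k) (hr : r * r = -1) pl a b
  (A : algType k) (x d : 'I_(a + b) -> A) (HA : is_A pl a b A x d)
  (A' : algType k) (x' d' : 'I_(b + a) -> A') (HA' : is_A (~~ pl) b a A' x' d') :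
  exists F : A' -> A,
  [/\ forall c u v, F (c *: u + v) = c *: F u + F v,
      F 1 = 1,
      forall u v, Cpart x' d' u -> Cpart x' d' v -> F (u * v) = F u * F v &
      forall w, F (word_val x' d' w) = if odd (size w) then 0 else
        cw r [seq odd_idx b g.2 | g <- w] *: word_val x d [seq swg g | g <- w]].
Proof.
have [t ht] := theta_exists HA.
have YR := Y_rels hr HA ht.
have [[Phi [hP Pv]] _] := HA'.2 _ _ _ YR.
have Pgen g : Phi (gen_val x' d' g) = @Yg k r a b A x d t g.
  by case: g => [[] j]; rewrite /gen_val /Yg /=; have [h1 h2] := Pv j.
have Pword w : Phi (word_val x' d' w) =
  if odd (size w) then
    SDP 0 (cw r [seq odd_idx b g.2 | g <- w] *: word_val x d [seq swg g | g <- w])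
  else SDP (cw r [seq odd_idx b g.2 | g <- w] *: word_val x d [seq swg g | g <- w]) 0.
  by rewrite /word_val (hom_prod hP) (eq_bigr _ (fun g _ => Pgen g)) (Yg_prod ht).
have PC u : Cpart x' d' u -> sd2 (Phi u) = 0.
  move=> [s [hs ->]]; rewrite (hom_sum hP) sd2_sum big1_seq // => pw /andP [_ hin].
  have := allP hs pw hin; rewrite /= in_GammaE => he.
  by rewrite (homZ hP) Pword (negbTE he) sdscaleE /= scaler0.
exists (fun u => sd1 (Phi u)); split.
- by move=> c u v; rewrite (homD hP) (homZ hP); case: (Phi u); case: (Phi v).
- by rewrite (hom1 hP).
- move=> u v Cu Cv; rewrite (homM hP) (sdp_eta (Phi u)) (sdp_eta (Phi v)) (PC u Cu) (PC v Cv).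
  by rewrite sdmulE /= t0 mulr0 addr0.
- by move=> w; rewrite Pword; case: (odd (size w)).
Qed.

Section Generic.
Variables (k : fieldType) (r : k) (hr : r * r = -1).

Lemma eps_pair (s : seq bool) :
  \prod_(h <- s) eps k (~~ h) * \prod_(h <- s) eps k h = (-1) ^+ size s.
Proof.
elim: s => [|h s IH]; first by rewrite !big_nil mulr1.
rewrite !big_cons /= exprS -IH.
have -> : eps k (~~ h) = - eps k h by case: h; rewrite /eps /= ?opprK.
set P1 := \prod_(j <- s) eps k (~~ j); set P2 := \prod_(j <- s) eps k j.
transitivity (- (eps k h * eps k h) * (P1 * P2)); first by ring.
by rewrite eps2 mulN1r.
Qed.

Lemma cw_inv (s : seq bool) :
  cw r s * cw r (map negb s) = if odd (size s) then r else 1.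
Proof.
elim: s => [|o s IH]; first by rewrite /= mulr1.
rewrite /= big_map.
have -> : \prod_(h <- s) eps k (~~ ~~ h) = \prod_(h <- s) eps k h.
  by apply: eq_bigr => h _; rewrite negbK.
have E : al k r (~~ o) * al k r (~~ ~~ o) = r by case: o; rewrite /al /= ?mulr1 ?mul1r.
transitivity ((al k r (~~ o) * al k r (~~ ~~ o)) *
   (\prod_(h <- s) eps k (~~ h) * \prod_(h <- s) eps k h) * (cw r s * cw r [seq ~~ i | i <- s])).
  ring.
rewrite E eps_pair IH.
rewrite -signr_odd; case: (odd (size s)) => /=.
  by rewrite expr1 mulrN1 mulNr hr opprK.
by rewrite expr0 !mulr1.
Qed.

Variables (a b : nat) (A : algType k) (x d : 'I_(a + b) -> A)
  (A' : algType k) (x' d' : 'I_(b + a) -> A').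

Definition twprops (F : A' -> A) :=
  (forall c u v, F (c *: u + v) = c *: F u + F v) /\
  forall w, F (word_val x' d' w) = if odd (size w) then 0 else
        cw r [seq odd_idx b g.2 | g <- w] *: word_val x d [seq swg g | g <- w].

Lemma lin0 (F : A' -> A) : twprops F -> F 0 = 0.
Proof.
move=> [h _]; have := h 1 0 0; rewrite !scale1r addr0 => e.
by apply: (@addIr _ (F 0)); rewrite -e add0r.
Qed.
Arguments lin0 {F}.
Lemma linZ F c u : twprops F -> F (c *: u) = c *: F u.
Proof. by move=> hF; have := hF.1 c u 0; rewrite !addr0 (lin0 hF) addr0. Qed.
Arguments linZ {F}.
Lemma linD F u v : twprops F -> F (u + v) = F u + F v.
Proof. by move=> hF; have := hF.1 1 u v; rewrite !scale1r. Qed.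
Arguments linD {F}.
Lemma linS F (I : Type) (s : seq I) (G : I -> A') : twprops F ->
  F (\sum_(i <- s) G i) = \sum_(i <- s) F (G i).
Proof. by move=> hF; elim: s => [|i s IH]; rewrite ?big_nil ?(lin0 hF) // !big_cons (linD _ _ hF) IH. Qed.

Arguments linS {F I}.
Lemma tw_C F u : twprops F -> Cpart x' d' u -> Cpart x d (F u).
Proof.
move=> hF [s [hs ->]].
exists [seq (pw.1 * cw r [seq odd_idx b g.2 | g <- pw.2], [seq swg g | g <- pw.2]) | pw <- s].
split.
  apply/allP => pw' /mapP [pw hin ->] /=.
  by rewrite in_GammaE size_map -in_GammaE (allP hs pw hin).
rewrite (linS _ _ hF) big_map; apply: eq_big_seq => pw hin /=.
have := allP hs pw hin; rewrite /= in_GammaE => he.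
by rewrite (linZ _ _ hF) hF.2 (negbTE he) scalerA.
Qed.

Lemma word_par_sw (w : seq (gen (b + a))) : ~~ odd (size w) ->
  word_par a [seq swg g | g <- w] = word_par b w.
Proof.
move=> he; rewrite /word_par count_map.
rewrite (eq_count (a2 := predC (fun g : gen (b + a) => odd_idx b g.2))); last first.
  by move=> g /=; rewrite sw_odd.
have := count_predC (fun g : gen (b + a) => odd_idx b g.2) w => hc.
have -> : count (predC (fun g : gen (b + a) => odd_idx b g.2)) w =
          (size w - count (fun g : gen (b + a) => odd_idx b g.2) w)%N.
  by rewrite -hc addKn.
by rewrite oddB ?count_size // (negbTE he).
Qed.

Lemma tw_P F par u : twprops F -> Apar b x' d' par u -> Apar a x d par (F u).
Proof.
move=> hF [s [hs ->]].
exists [seq (pw.1 * cw r [seq odd_idx b g.2 | g <- pw.2], [seq swg g | g <- pw.2]) |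
        pw <- s & ~~ odd (size pw.2)].
split.
  apply/allP => pw' /mapP [pw]; rewrite mem_filter => /andP [he hin] -> /=.
  by rewrite word_par_sw // (allP hs pw hin).
rewrite (linS _ _ hF) big_map big_filter [RHS]big_mkcond /=; apply: eq_bigr => pw _.
rewrite (linZ _ _ hF) hF.2; case: (odd (size pw.2)) => /=; first by rewrite scaler0.
by rewrite scalerA.
Qed.

End Generic.
Arguments twprops {k} r {a b A} x d {A'} x' d' F.
Arguments lin0 {k r a b A x d A' x' d' F}.
Arguments linZ {k r a b A x d A' x' d' F}.
Arguments linD {k r a b A x d A' x' d' F}.
Arguments linS {k r a b A x d A' x' d' F I}.
Arguments tw_C {k r a b A x d A' x' d' F u}.
Arguments tw_P {k r a b A x d A' x' d' F par u}.
Arguments cw_inv {k r} hr s.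

Lemma roundtrip (k : fieldType) (r : k) (hr : r * r = -1) a b
  (A : algType k) (x d : 'I_(a + b) -> A) (A' : algType k) (x' d' : 'I_(b + a) -> A')
  (F : A' -> A) (G : A -> A') u :
  twprops r x d x' d' F -> twprops r x' d' x d G ->
  Cpart x' d' u -> G (F u) = u.
Proof.
move=> hF hG [s [hs ->]].
rewrite (linS _ _ hF) (linS _ _ hG); apply: eq_big_seq => pw hin.
have := allP hs pw hin; rewrite /= in_GammaE => he.
rewrite (linZ _ _ hF) hF.2 (negbTE he) (linZ _ _ hG) (linZ _ _ hG) hG.2 size_map (negbTE he).
rewrite !scalerA -map_comp (eq_map (@swgK b a)) map_id; congr (_ *: _).
rewrite -map_comp (eq_map (g := negb \o (fun g : gen (b + a) => odd_idx b g.2))); last first.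
  by move=> g /=; rewrite sw_odd.
by rewrite map_comp -mulrA cw_inv // size_map (negbTE he) mulr1.
Qed.
Arguments roundtrip {k r} hr {a b A x d A' x' d' F G u}.

Theorem mainTheorem16 (k : closedFieldType) (hk : [pchar k] =i pred0)
  (p q : nat) (hn : (0 < p + q)%N)
  (Ap : algType k) (xp dp : 'I_(p + q) -> Ap) (HAp : is_A true p q Ap xp dp)
  (Am : algType k) (xm dm : 'I_(q + p) -> Am) (HAm : is_A false q p Am xm dm) :
  super_iso (Cpart xp dp) (fun par => Apar p xp dp par)
            (Cpart xm dm) (fun par => Apar q xm dm par).
Proof.
have [r hr] : exists r : k, r * r = -1.
  have [r hr] := @solve_monicpoly k 2 (fun i => if i == 0%N then -1 else 0) isT.
  exists r; rewrite -expr2 hr big_ord_recr big_ord1 /= expr0 mulr1 mul0r addr0.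
  by [].
have [F [F1 F2 F3 F4]] := @transfer k r hr false q p Am xm dm HAm Ap xp dp HAp.
have [G [G1 G2 G3 G4]] := @transfer k r hr true p q Ap xp dp HAp Am xm dm HAm.
have hF : twprops r xm dm xp dp F by split.
have hG : twprops r xp dp xm dm G by split.
exists F; split; [split|split].
- by move=> u Cu; exact: (tw_C hF Cu).
- move=> v Cv; exists (G v); first exact: (tw_C hG Cv).
  exact: (roundtrip hr hG hF Cv).
- move=> u v Cu Cv e.
  by rewrite -(roundtrip hr hF hG Cu) e (roundtrip hr hF hG Cv).
- by [].
- by [].
- by [].
- by move=> par u _ Pu; exact: (tw_P hF Pu).
Qed.
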